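(* Let $V$ be a vector space over a field $\mathbb{K}$ and $F$ a bilinear form on $V$, and let $\lambda_F\in\mathrm{End}(\mathcal{T}(V))$ be defined by $\lambda_F(u)=\Lambda_F(u)(1)$. Then: (i) $\lambda_F(1)=1$ and $\lambda_F(x)=x$ for $x\in V$; (ii) $\lambda_F(x\otimes u)=i_x^F(\lambda_F(u))+x\otimes\lambda_F(u)$ for $x\in V$, $u\in\mathcal{T}(V)$; (iii) $\lambda_F\circ i_f=i_f\circ\lambda_F$ for all $f\in V^*$; (iv) if $G$ is another bilinear form on $V$, then $\lambda_F\circ\lambda_G=\lambda_{F+G}$; (v) $\lambda_0=\mathrm{Id}_{\mathcal{T}(V)}$; (vi) $\lambda_F:\mathcal{T}(V)\to\mathcal{T}(V)$ is a bijection; (vii) $\lambda_F$ preserves parity: for $x_1,\dots,x_p\in V$, $\alpha(\lambda_F(x_1\otimes\cdots\otimes x_p))=(-1)^p\lambda_F(x_1\otimes\cdots\otimes x_p)$.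
   Context: $\mathcal{T}(V)$ is the tensor algebra of $V$ (product $\otimes$). $\alpha$ is the algebra automorphism of $\mathcal{T}(V)$ with $\alpha(x_1\otimes\cdots\otimes x_p)=(-1)^p x_1\otimes\cdots\otimes x_p$. For $x\in V$, $e_x(u)=x\otimes u$. For $f\in V^*$, $i_f$ is the unique linear map on $\mathcal{T}(V)$ with $i_f(1)=0$ and $i_f(x\otimes u)=f(x)u-x\otimes i_f(u)$ ($x\in V$). For a bilinear form $F$ and $x\in V$, $i_x^F:=i_{f_x}$ with $f_x(y)=F(x,y)$. $\Lambda_F:\mathcal{T}(V)\to\mathrm{End}(\mathcal{T}(V))$ is the unique unital algebra homomorphism with $\Lambda_F(x)=e_x+i_x^F$ for $x\in V$. *)

(* Defs.v *)
From HB Require Import structures.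
From mathcomp Require Import all_boot all_order all_algebra.
Set Implicit Arguments. Unset Strict Implicit. Unset Printing Implicit Defensive.
Import GRing.Theory.
Local Open Scope ring_scope.

(* Tensor algebra T(V) of a K-vector space V, given abstractly by its
   universal property: a K-algebra A with a linear map iota : V -> A
   such that every linear map V -> B into a K-algebra B extends uniquely
   to an algebra morphism A -> B.  The tensor product x (x) u (x in V,
   u in T(V)) is  iota x * u. *)

Section TensorAlgebra.
Variables (K : fieldType) (V : lmodType K).

Definition linmap (U W : lmodType K) (f : U -> W) :=
  forall (a : K) (u v : U), f (a *: u + v) = a *: f u + f v.
Definition linform (f : V -> K) :=
  forall (a : K) (u v : V), f (a *: u + v) = a * f u + f v.
Definition bilinear_form (F : V -> V -> K) :=
  (forall x, linform (F x)) /\ (forall y, linform (fun x => F x y)).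

Definition is_tensor_algebra (A : algType K) (iota : V -> A) :=
  linmap iota /\
  forall (B : algType K) (f : V -> B), linmap f ->
    exists g : A -> B,
      [/\ linmap g, g 1 = 1, (forall u v, g (u * v) = g u * g v),
          (forall x, g (iota x) = f x) &
          (forall g' : A -> B, linmap g' -> g' 1 = 1 ->
              (forall u v, g' (u * v) = g' u * g' v) ->
              (forall x, g' (iota x) = f x) -> forall u, g' u = g u)].

Variables (A : algType K) (iota : V -> A).

Definition ptensor (s : seq V) : A := \prod_(x <- s) iota x.

Definition is_alpha (alpha : A -> A) :=
  linmap alpha /\
  forall s : seq V, alpha (ptensor s) = (-1) ^+ size s *: ptensor s.

Definition is_contraction (f : V -> K) (i_f : A -> A) :=
  [/\ linmap i_f, i_f 1 = 0 &
      forall x u, i_f (iota x * u) = f x *: u - iota x * i_f u].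

(* Lambda_F : T(V) -> End(T(V)), the unital algebra morphism with
   Lambda_F(x) = e_x + i^F_x, where i : V^* -> End(T(V)) is the family of
   contractions i_f. *)
Definition is_Lambda (i : (V -> K) -> A -> A) (F : V -> V -> K)
    (Lam : A -> A -> A) :=
  [/\ forall u, linmap (Lam u),
      forall (a : K) u v w, Lam (a *: u + v) w = a *: Lam u w + Lam v w,
      forall w, Lam 1 w = w,
      forall u v w, Lam (u * v) w = Lam u (Lam v w) &
      forall x w, Lam (iota x) w = iota x * w + i (F x) w].

Definition lam (Lam : A -> A -> A) (u : A) : A := Lam u 1.

End TensorAlgebra.

Definition addform (K : fieldType) (V : lmodType K) (F G : V -> V -> K) :=
  fun x y => F x y + G x y.

(* Main.v *)
Require Import Defs.
From HB Require Import structures.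
From mathcomp Require Import all_boot all_order all_algebra.
From mathcomp Require Import boolp.
Set Implicit Arguments. Unset Strict Implicit. Unset Printing Implicit Defensive.
Import GRing.Theory.
Local Open Scope ring_scope.

Section Lin.
Variable K : fieldType.
Lemma lm0 (U W : lmodType K) (f : U -> W) : linmap f -> f 0 = 0.
Proof. move=> H; have E := H 1 0 0; rewrite scale1r addr0 scale1r in E.
by apply: (addrI (f 0)); rewrite addr0 -E. Qed.
Lemma lmD (U W : lmodType K) (f : U -> W) : linmap f -> forall u v, f (u + v) = f u + f v.
Proof. by move=> H u v; have := H 1 u v; rewrite !scale1r. Qed.
Lemma lmZ (U W : lmodType K) (f : U -> W) : linmap f -> forall a u, f (a *: u) = a *: f u.
Proof. by move=> H a u; have := H a u 0; rewrite !addr0 lm0 // addr0. Qed.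
Lemma lmN (U W : lmodType K) (f : U -> W) : linmap f -> forall u, f (- u) = - f u.
Proof. by move=> H u; rewrite -scaleN1r lmZ // scaleN1r. Qed.
Lemma lmB (U W : lmodType K) (f : U -> W) : linmap f -> forall u v, f (u - v) = f u - f v.
Proof. by move=> H u v; rewrite lmD // lmN. Qed.
Lemma lm_comp (U W X : lmodType K) (f : U -> W) (g : W -> X) :
  linmap f -> linmap g -> linmap (g \o f).
Proof. by move=> Hf Hg a u v /=; rewrite Hf Hg. Qed.
End Lin.

Section Span.
Variables (K : fieldType) (V : lmodType K) (A : algType K) (iota : V -> A).

Definition lcomb (r : seq (K * seq V)) : A := \sum_(p <- r) p.1 *: ptensor iota p.2.
Definition spanned (u : A) := exists r, u = lcomb r.
Definition Sp : pred A := fun u => `[< spanned u >].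

Lemma ptensor_cons x s : ptensor iota (x :: s) = iota x * ptensor iota s.
Proof. by rewrite /ptensor big_cons. Qed.
Lemma ptensor_cat s t : ptensor iota (s ++ t) = ptensor iota s * ptensor iota t.
Proof. by rewrite /ptensor big_cat. Qed.

Lemma lcomb_cat r1 r2 : lcomb (r1 ++ r2) = lcomb r1 + lcomb r2.
Proof. by rewrite /lcomb big_cat. Qed.
Lemma lcomb_scale a r : lcomb [seq (a * p.1, p.2) | p <- r] = a *: lcomb r.
Proof. rewrite /lcomb big_map scaler_sumr; apply: eq_bigr => p _ /=; by rewrite scalerA. Qed.
Lemma lcomb_mul r1 r2 :
  lcomb [seq (p.1 * q.1, p.2 ++ q.2) | p <- r1, q <- r2] = lcomb r1 * lcomb r2.
Proof.
rewrite /lcomb big_allpairs_dep mulr_suml; apply: eq_bigr => p _.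
rewrite mulr_sumr; apply: eq_bigr => q _ /=.
by rewrite ptensor_cat -scalerAl -scalerAr scalerA.
Qed.

Lemma Sp_closed : GRing.subsemialg_closed Sp.
Proof.
split.
- apply/asboolP; exists [:: (1, [::])]; by rewrite /lcomb big_seq1 scale1r /ptensor big_nil.
- split.
  + apply/asboolP; exists [::]; by rewrite /lcomb big_nil.
  + move=> u v /asboolP [r1 ->] /asboolP [r2 ->]; apply/asboolP.
    by exists (r1 ++ r2); rewrite lcomb_cat.
- move=> a u /asboolP [r ->]; apply/asboolP; exists [seq (a * p.1, p.2) | p <- r].
  by rewrite lcomb_scale.
- move=> u v /asboolP [r1 ->] /asboolP [r2 ->]; apply/asboolP.
  by exists [seq (p.1 * q.1, p.2 ++ q.2) | p <- r1, q <- r2]; rewrite lcomb_mul.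
Qed.

HB.instance Definition _ := GRing.isSubalgClosed.Build K A Sp Sp_closed.

Record SA := MkSA { sa_val : A; sa_prop : Sp sa_val }.
HB.instance Definition _ := [isSub for sa_val].
HB.instance Definition _ := [Choice of SA by <:].
HB.instance Definition _ := [SubChoice_isSubAlgebra of SA by <:].



Lemma Sp_iota x : Sp (iota x).
Proof. apply/asboolP; exists [:: (1, [:: x])].
by rewrite /lcomb big_seq1 scale1r /= ptensor_cons /ptensor big_nil mulr1. Qed.

Lemma spanned_all (HT : is_tensor_algebra iota) u : spanned u.
Proof.
case: HT => Hlin HU.
pose f : V -> SA := fun x => MkSA (Sp_iota x).
have fl : linmap f.
  move=> a x y; apply: val_inj => /=.
  by rewrite Hlin.
have [g [gl g1 gM gi _]] := HU _ f fl.
have [g0 [_ _ _ _ Hu]] := HU _ iota Hlin.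
have E1 : forall u, sa_val (g u) = g0 u.
  apply: Hu.
  - by move=> a x y /=; rewrite gl.
  - by rewrite g1.
  - by move=> x y; rewrite gM.
  - by move=> x; rewrite gi.
have E2 : forall u, u = g0 u by apply: Hu.
have := sa_prop (g u); rewrite E1 -E2.
by move/asboolP.
Qed.
End Span.

Section Main.
Variables (K : fieldType) (V : lmodType K) (A : algType K) (iota : V -> A).
Variable HT : is_tensor_algebra iota.
Variable i : (V -> K) -> A -> A.
Variable Hi : forall f, linform f -> is_contraction iota f (i f).

Lemma lm_add (f g : A -> A) : linmap f -> linmap g -> linmap (fun u => f u + g u).
Proof. by move=> Hf Hg a u v; rewrite Hf Hg scalerDr addrACA. Qed.
Lemma lm_opp (f : A -> A) : linmap f -> linmap (fun u => - f u).
Proof. by move=> Hf a u v; rewrite Hf opprD scalerN. Qed.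
Lemma lm_zero : linmap (fun _ : A => (0 : A)).
Proof. by move=> a u v; rewrite scaler0 addr0. Qed.
Lemma lm_id : linmap (fun u : A => u).
Proof. by []. Qed.
Lemma lm_mul x : linmap (fun u : A => iota x * u).
Proof. by move=> a u v; rewrite mulrDr scalerAr. Qed.

Lemma lin_ext (f g : A -> A) : linmap f -> linmap g ->
  (forall s, f (ptensor iota s) = g (ptensor iota s)) -> forall u, f u = g u.
Proof.
move=> Hf Hg E u; have [r ->] := spanned_all HT u; rewrite /lcomb.
elim: r => [|p r IH]; first by rewrite big_nil !lm0.
by rewrite big_cons !lmD // !lmZ // E IH.
Qed.

Lemma ptensor_nil : ptensor iota [::] = 1.
Proof. by rewrite /ptensor big_nil. Qed.

Lemma i_lin f : linform f -> linmap (i f).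
Proof. by move=> /Hi []. Qed.
Lemma i_1 f : linform f -> i f 1 = 0.
Proof. by move=> /Hi []. Qed.
Lemma i_cons f : linform f -> forall x u, i f (iota x * u) = f x *: u - iota x * i f u.
Proof. by move=> /Hi []. Qed.

Lemma i0 f : linform f -> (forall x, f x = 0) -> forall u, i f u = 0.
Proof.
move=> lf f0; apply: lin_ext; [exact: i_lin | exact: lm_zero |].
elim=> [|x s IH]; first by rewrite ptensor_nil i_1.
by rewrite ptensor_cons i_cons // IH f0 scale0r mulr0 subrr.
Qed.

Lemma iadd f g h : linform f -> linform g -> linform h ->
  (forall x, h x = f x + g x) -> forall u, i h u = i f u + i g u.
Proof.
move=> lf lg lh E; apply: lin_ext; [exact: i_lin | apply: lm_add; exact: i_lin |].
elim=> [|x s IH]; first by rewrite ptensor_nil !i_1 // addr0.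
rewrite ptensor_cons !i_cons // IH E scalerDl mulrDr opprD addrACA //.
Qed.

Lemma ianti f g : linform f -> linform g -> forall u, i f (i g u) = - i g (i f u).
Proof.
move=> lf lg; apply: lin_ext.
- apply: lm_comp (i_lin lg) (i_lin lf).
- apply: lm_opp; apply: lm_comp (i_lin lf) (i_lin lg).
elim=> [|x s IH]; first by rewrite ptensor_nil !i_1 // (lm0 (i_lin lf)) (lm0 (i_lin lg)) oppr0.
rewrite ptensor_cons !i_cons // (lmB (i_lin lf)) (lmB (i_lin lg)) (lmZ (i_lin lf)) (lmZ (i_lin lg)).
rewrite !i_cons // IH mulrN.
move: (g x *: i f _) (f x *: i g _) (iota x * _) => X Y Z.
by rewrite opprK opprB opprD addrA addrAC.
Qed.

Section Lam.
Variables (F : V -> V -> K) (HF : bilinear_form F) (L : A -> A -> A).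
Variable HL : is_Lambda iota i F L.

Lemma lamL : linmap (fun u => L u 1).
Proof. by case: HL => _ H _ _ _ a u v; rewrite H. Qed.
Lemma lam_1 : L 1 1 = 1.
Proof. by case: HL. Qed.
Lemma lam_cons x u : L (iota x * u) 1 = i (F x) (L u 1) + iota x * L u 1.
Proof. by case: HL => _ _ _ HM HI; rewrite HM HI addrC. Qed.
Lemma lam_iota x : L (iota x) 1 = iota x.
Proof. have lF : linform (F x) by case: HF.
by rewrite -[iota x]mulr1 lam_cons lam_1 i_1 // add0r. Qed.

Lemma lam_i f : linform f -> forall u, L (i f u) 1 = i f (L u 1).
Proof.
move=> lf; have lF : linform (F _) by case: HF.
apply: lin_ext.
- exact: (lm_comp (i_lin lf) lamL).
- exact: (lm_comp lamL (i_lin lf)).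
elim=> [|x s IH]; first by rewrite ptensor_nil i_1 // lam_1 i_1 //; exact: (lm0 lamL).
rewrite ptensor_cons i_cons //= (lmB lamL) (lmZ lamL) lam_cons IH.
rewrite lam_cons (lmD (i_lin lf)) i_cons // ianti //.
move: (f x *: _) (i f (i (F x) _)) (iota x * i f _) => X Y Z.
by rewrite opprD opprK addrCA.
Qed.

Lemma lam_zero : (forall x y, F x y = 0) -> forall u, L u 1 = u.
Proof.
move=> F0; have lF : linform (F _) by case: HF.
apply: lin_ext; [exact: lamL | exact: lm_id |].
elim=> [|x s IH]; first by rewrite ptensor_nil lam_1.
by rewrite ptensor_cons lam_cons IH i0 // add0r.
Qed.
End Lam.

Lemma lam_comp F G H (HF : bilinear_form F) (HG : bilinear_form G) (HH : bilinear_form H)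
  (L1 L2 L3 : A -> A -> A) : is_Lambda iota i F L1 -> is_Lambda iota i G L2 ->
  is_Lambda iota i H L3 -> (forall x y, H x y = F x y + G x y) ->
  forall u, L1 (L2 u 1) 1 = L3 u 1.
Proof.
move=> H1 H2 H3 E.
have lF : linform (F _) by case: HF.
have lG : linform (G _) by case: HG.
have lH : linform (H _) by case: HH.
apply: lin_ext.
- exact: (lm_comp (lamL H2) (lamL H1)).
- exact: (lamL H3).
elim=> [|x s IH]; first by rewrite /= ptensor_nil (lam_1 H2) (lam_1 H1) (lam_1 H3).
rewrite ptensor_cons /= (lam_cons H2) (lmD (lamL H1)) (lam_i HF H1) // (lam_cons H1) IH.
rewrite (lam_cons H3) (iadd (lF x) (lG x) (lH x) (E x)) addrA; congr (_ + _); exact: addrC.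
Qed.
End Main.

Lemma alpha_mul (K : fieldType) (V : lmodType K) (A : algType K) (iota : V -> A)
  (HT : is_tensor_algebra iota) alpha (Ha : is_alpha iota alpha) x u :
  alpha (iota x * u) = - (iota x * alpha u).
Proof.
case: Ha => al Hp.
move: u; apply: (lin_ext HT).
- exact: (lm_comp (lm_mul iota x) al).
- exact: (lm_opp (lm_comp al (lm_mul iota x))).
move=> s /=; rewrite -ptensor_cons Hp Hp /= exprS mulN1r scaleNr ptensor_cons scalerAr //.
Qed.

Lemma alpha_i (K : fieldType) (V : lmodType K) (A : algType K) (iota : V -> A)
  (HT : is_tensor_algebra iota) alpha (Ha : is_alpha iota alpha)
  (i : (V -> K) -> A -> A) (Hi : forall f, linform f -> is_contraction iota f (i f))
  f (lf : linform f) u : alpha (i f u) = - i f (alpha u).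
Proof.
have al := Ha.1.
move: u; apply: (lin_ext HT).
- exact: (lm_comp (i_lin Hi lf) al).
- exact: (lm_opp (lm_comp al (i_lin Hi lf))).
elim=> [|x s IH] /=.
  by rewrite ptensor_nil (i_1 Hi lf) (lm0 al) -(ptensor_nil iota) Ha.2 /= expr0 scale1r ptensor_nil (i_1 Hi lf) oppr0.
rewrite ptensor_cons (i_cons Hi lf) (lmB al) (lmZ al) (alpha_mul HT Ha) IH.
rewrite (alpha_mul HT Ha) (lmN (i_lin Hi lf)) opprK (i_cons Hi lf) mulrN opprK //.
Qed.

Lemma bf_add (K : fieldType) (V : lmodType K) (F G : V -> V -> K) :
  bilinear_form F -> bilinear_form G -> bilinear_form (addform F G).
Proof.
move=> [F1 F2] [G1 G2]; rewrite /addform; split.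
- by move=> x a u v; rewrite F1 G1 mulrDr addrACA.
- by move=> y a u v /=; rewrite F2 G2 mulrDr addrACA.
Qed.
Lemma bf_zero (K : fieldType) (V : lmodType K) : bilinear_form (fun _ _ : V => (0 : K)).
Proof. by split=> ? a u v; rewrite mulr0 addr0. Qed.
Lemma bf_opp (K : fieldType) (V : lmodType K) (F : V -> V -> K) :
  bilinear_form F -> bilinear_form (fun x y => - F x y).
Proof.
move=> [F1 F2]; split.
- by move=> x a u v; rewrite F1 opprD mulrN.
- by move=> y a u v /=; rewrite F2 opprD mulrN.
Qed.

Theorem mainTheorem3 (K : fieldType) (V : lmodType K) (A : algType K)
    (iota : V -> A) (HT : is_tensor_algebra iota)
    (alpha : A -> A) (Halpha : is_alpha iota alpha)
    (i : (V -> K) -> A -> A)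
    (Hi : forall f, linform f -> is_contraction iota f (i f))
    (Lam : (V -> V -> K) -> A -> A -> A)
    (HLam : forall F, bilinear_form F -> is_Lambda iota i F (Lam F))
    (F : V -> V -> K) (HF : bilinear_form F) :
  (lam (Lam F) 1 = 1 /\ (forall x, lam (Lam F) (iota x) = iota x)) /\
      (forall x u, lam (Lam F) (iota x * u)
                   = i (F x) (lam (Lam F) u) + iota x * lam (Lam F) u) /\
      (forall f, linform f -> forall u, lam (Lam F) (i f u) = i f (lam (Lam F) u)) /\
      (forall G, bilinear_form G ->
         forall u, lam (Lam F) (lam (Lam G) u) = lam (Lam (addform F G)) u) /\
      (forall u, lam (Lam (fun _ _ => 0)) u = u) /\
      bijective (lam (Lam F)) /\
      (forall s : seq V, alpha (lam (Lam F) (ptensor iota s))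
                         = (-1) ^+ size s *: lam (Lam F) (ptensor iota s)).
Proof.
have HL := HLam F HF.
have lF : forall x, linform (F x) by case: HF.
rewrite /lam; split; [split|].
  exact: (lam_1 HL).
  exact: (lam_iota Hi HF HL).
split; first exact: (lam_cons HL).
split; first by move=> f lf; exact: (lam_i HT Hi HF HL lf).
split.
  move=> G HG u; exact: (lam_comp HT Hi HF HG (bf_add HF HG) HL (HLam _ HG) (HLam _ (bf_add HF HG))).  
split; first by apply: (lam_zero HT Hi (bf_zero V) (HLam _ (bf_zero V))).
split.
  have HF' := bf_opp HF.
  exists (fun u => Lam (fun x y => - F x y) u 1) => u.
  - rewrite (lam_comp HT Hi HF' HF (bf_add HF' HF) (HLam _ HF') HL (HLam _ (bf_add HF' HF))) //.
    apply: (lam_zero HT Hi (bf_add HF' HF) (HLam _ (bf_add HF' HF))) => x y.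
    by rewrite /addform addNr.
  - rewrite (lam_comp HT Hi HF HF' (bf_add HF HF') HL (HLam _ HF') (HLam _ (bf_add HF HF'))) //.
    apply: (lam_zero HT Hi (bf_add HF HF') (HLam _ (bf_add HF HF'))) => x y.
    by rewrite /addform addrN.
elim=> [|x s IH].
  by rewrite ptensor_nil (lam_1 HL) -(ptensor_nil iota) Halpha.2.
rewrite ptensor_cons (lam_cons HL) (lmD Halpha.1) (alpha_i HT Halpha Hi (lF x)).
rewrite (alpha_mul HT Halpha) IH /= exprS mulN1r scaleNr scalerDr opprD.
by rewrite (lmZ (i_lin Hi (lF x))) scalerAr.
Qed.
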